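(* Let $g(x,y)=xy$. Let $t>0$ and let $I=[a,a+3t]$, $J=[b,b+3t]$ with $\tfrac23\le a\le b\le 1$, and assume $I$ and $J$ are either identical or disjoint. Write $\ddot I=[a,a+t]\cup[a+2t,a+3t]$ and $\ddot J=[b,b+t]\cup[b+2t,b+3t]$. Then: (i) if $a<b$, then $g(\ddot I,\ddot J) = g(I,J)$; (ii) if $a=b$ (so $I=J$), then $g(\ddot I,\ddot I) = g(I,I)\setminus\big((a+2t)^2-t^2,\,(a+2t)^2\big)$.
   Context: For sets $A,B\subset\mathbb{R}$, $g(A,B)=\{xy: x\in A, y\in B\}$. *)

(* Defs.v *)
From Stdlib Require Import Reals.
Open Scope R_scope.

Definition g (A B : R -> Prop) : R -> Prop :=
  fun z => exists x y, A x /\ B y /\ z = x * y.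

Definition Icc (l u : R) : R -> Prop := fun x => l <= x <= u.

Definition Ioo (l u : R) : R -> Prop := fun x => l < x < u.

Definition ddot (a t : R) : R -> Prop :=
  fun x => Icc a (a + t) x \/ Icc (a + 2 * t) (a + 3 * t) x.

Definition set_eq (A B : R -> Prop) : Prop := forall z, A z <-> B z.

(* Main.v *)
Require Import Defs.
From Stdlib Require Import Reals Lra Psatz.
Open Scope R_scope.

Lemma rect (A B : R -> Prop) x0 x1 y0 y1 z :
  0 < x0 -> 0 < y0 -> x0 <= x1 -> y0 <= y1 ->
  (forall x, x0 <= x <= x1 -> A x) -> (forall y, y0 <= y <= y1 -> B y) ->
  x0 * y0 <= z <= x1 * y1 -> g A B z.
Proof.
  intros hx hy hx1 hy1 HA HB [hz1 hz2].
  destruct (Rle_lt_dec z (x0 * y1)) as [h|h].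
  - exists x0, (z / x0). split; [apply HA; lra|]. split.
    + apply HB. split.
      * apply (Rmult_le_reg_l x0); [lra|]. field_simplify; lra.
      * apply (Rmult_le_reg_l x0); [lra|]. field_simplify; lra.
    + field; lra.
  - exists (z / y1), y1. split.
    + apply HA. split.
      * apply (Rmult_le_reg_r y1); [lra|]. field_simplify; lra.
      * apply (Rmult_le_reg_r y1); [lra|]. field_simplify; lra.
    + split; [apply HB; lra|]. field; lra.
Qed.

Lemma prod_bounds x0 x1 y0 y1 x y :
  0 <= x0 -> 0 <= y0 -> x0 <= x <= x1 -> y0 <= y <= y1 ->
  x0 * y0 <= x * y <= x1 * y1.
Proof. intros. split; apply Rmult_le_compat; lra. Qed.

Theorem lemma3p8 (a b t : R) (ht : 0 < t)
  (hab : 2 / 3 <= a /\ a <= b /\ b <= 1)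
  (hIJ : set_eq (Icc a (a + 3 * t)) (Icc b (b + 3 * t)) \/
         (forall x, ~ (Icc a (a + 3 * t) x /\ Icc b (b + 3 * t) x))) :
  (a < b ->
     set_eq (g (ddot a t) (ddot b t)) (g (Icc a (a + 3 * t)) (Icc b (b + 3 * t)))) /\
  (a = b ->
     set_eq (g (ddot a t) (ddot a t))
            (fun z => g (Icc a (a + 3 * t)) (Icc a (a + 3 * t)) z /\
                      ~ Ioo ((a + 2 * t) ^ 2 - t ^ 2) ((a + 2 * t) ^ 2) z)).
Proof.
  destruct hab as [ha [hab hb]].
  split.
  - intros hlt.
    assert (hsep : a + 3 * t < b).
    { destruct hIJ as [E|D].
      - exfalso. destruct (E a) as [E1 _]. unfold Icc in E1.
        assert (a <= a <= a + 3 * t) by lra. specialize (E1 H). lra.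
      - destruct (Rlt_le_dec (a + 3 * t) b) as [h|h]; auto.
        exfalso. apply (D b). unfold Icc; lra. }
    intros z; split.
    + intros (x & y & hx & hy & ->). exists x, y.
      unfold ddot, Icc in *. repeat split; lra.
    + intros (x & y & hx & hy & ->). unfold Icc in hx, hy.
      pose proof (prod_bounds a (a+3*t) b (b+3*t) x y ltac:(lra) ltac:(lra) hx hy) as [l u].
      set (z := x * y) in *.
      unfold ddot.
      destruct (Rle_lt_dec z ((a+t)*(b+t))).
      { apply (rect _ _ a (a+t) b (b+t)); try lra; intros; left; unfold Icc; lra. }
      destruct (Rle_lt_dec z ((a+t)*(b+3*t))).
      { apply (rect _ _ a (a+t) (b+2*t) (b+3*t)); try lra;
          [intros; left; unfold Icc; lra | intros; right; unfold Icc; lra |].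
        split; [nra|lra]. }
      destruct (Rle_lt_dec z ((a+3*t)*(b+t))).
      { apply (rect _ _ (a+2*t) (a+3*t) b (b+t)); try lra;
          [intros; right; unfold Icc; lra | intros; left; unfold Icc; lra |].
        split; [nra|lra]. }
      apply (rect _ _ (a+2*t) (a+3*t) (b+2*t) (b+3*t)); try lra;
          [intros; right; unfold Icc; lra | intros; right; unfold Icc; lra |].
      split; [nra|lra].
  - intros <-. intros z; split.
    + intros (x & y & hx & hy & ->). unfold ddot, Icc, Ioo in *. split.
      * exists x, y. repeat split; lra.
      * intros [h1 h2].
        destruct hx as [hx|hx]; destruct hy as [hy|hy].
        -- pose proof (prod_bounds a (a+t) a (a+t) x y ltac:(lra) ltac:(lra) hx hy). nra.
        -- pose proof (prod_bounds a (a+t) (a+2*t) (a+3*t) x y ltac:(lra) ltac:(lra) hx hy). nra.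
        -- pose proof (prod_bounds (a+2*t) (a+3*t) a (a+t) x y ltac:(lra) ltac:(lra) hx hy). nra.
        -- pose proof (prod_bounds (a+2*t) (a+3*t) (a+2*t) (a+3*t) x y ltac:(lra) ltac:(lra) hx hy). nra.
    + intros [(x & y & hx & hy & ->) hn]. unfold Icc, Ioo in *.
      pose proof (prod_bounds a (a+3*t) a (a+3*t) x y ltac:(lra) ltac:(lra) hx hy) as [l u].
      set (z := x * y) in *.
      unfold ddot.
      destruct (Rle_lt_dec z ((a+t)*(a+t))).
      { apply (rect _ _ a (a+t) a (a+t)); try lra; intros; left; unfold Icc; lra. }
      destruct (Rle_lt_dec z ((a+t)*(a+3*t))).
      { apply (rect _ _ a (a+t) (a+2*t) (a+3*t)); try lra;
          [intros; left; unfold Icc; lra | intros; right; unfold Icc; lra |].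
        split; [nra|lra]. }
      apply (rect _ _ (a+2*t) (a+3*t) (a+2*t) (a+3*t)); try lra;
          try (intros; right; unfold Icc; lra).
Qed.
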